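(* Let $0<\alpha\le\beta\le\pi$ and $f:S_\alpha\to S_\beta$, $f(z)=z^{\beta/\alpha}$. Then for all $x,y\in S_\alpha$, $$w_{S_\alpha}(x,y)\le w_{S_\beta}(f(x),f(y))\le\frac{\beta\sin(\alpha/2)}{\alpha\sin(\beta/2)}\,w_{S_\alpha}(x,y),$$ and the constants are sharp.
   Context: For $\theta\in(0,2\pi)$, $S_\theta=\{z\in\mathbb{C}:0<\arg z<\theta\}$ is the open sector; $z^{\beta/\alpha}$ uses the branch with $\arg z\in(0,\alpha)$. For a domain $G$ and $x\in G$, $d_G(x)=\inf\{|x-z|:z\in\partial G\}$; $S^1(x,r)$ is the circle of center $x$ and radius $r$. For convex $G$, $w_G(x,y)=\frac{|x-y|}{\min\{\inf_{\tilde y\in\tilde Y}|x-\tilde y|,\ \inf_{\tilde x\in\tilde X}|y-\tilde x|\}}$ with $\tilde X=\{\tilde x\in S^{1}(x,2d_G(x)):(x+\tilde x)/2\in\partial G\}$ and $\tilde Y=\{\tilde y\in S^{1}(y,2d_G(y)):(y+\tilde y)/2\in\partial G\}$. *)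

(* Defs.v *)
From Stdlib Require Import Reals.
From Coquelicot Require Import Coquelicot.
Open Scope R_scope.

Definition Rinf (P : R -> Prop) : R := real (Glb_Rbar P).

Definition boundary (G : C -> Prop) (z : C) : Prop :=
  forall eps : R, 0 < eps ->
    (exists a, G a /\ Cmod (a - z)%C < eps) /\
    (exists b, ~ G b /\ Cmod (b - z)%C < eps).

Definition dG (G : C -> Prop) (x : C) : R :=
  Rinf (fun r => exists z, boundary G z /\ r = Cmod (x - z)%C).

Definition tildeSet (G : C -> Prop) (x xt : C) : Prop :=
  Cmod (xt - x)%C = 2 * dG G x /\ boundary G ((x + xt) / RtoC 2)%C.

Definition wG (G : C -> Prop) (x y : C) : R :=
  Cmod (x - y)%C /
  Rmin (Rinf (fun r => exists yt, tildeSet G y yt /\ r = Cmod (x - yt)%C))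
       (Rinf (fun r => exists xt, tildeSet G x xt /\ r = Cmod (y - xt)%C)).

Definition sector (theta : R) (z : C) : Prop :=
  z <> 0%C /\
  exists phi, 0 < phi < theta /\ z = (Cmod z * cos phi, Cmod z * sin phi).

Definition parg (z : C) : R :=
  if Rle_dec 0 (Im z) then acos (Re z / Cmod z)
  else 2 * PI - acos (Re z / Cmod z).

(* z^(b/a) with the branch arg z in (0, a) (a < 2 pi): for z in S_a this
   equals |z|^(b/a) e^{i (b/a) arg z}. *)
Definition spow (a b : R) (z : C) : C :=
  (Rpower (Cmod z) (b / a) * cos (b / a * parg z),
   Rpower (Cmod z) (b / a) * sin (b / a * parg z)).

(* Main.v *)
Require Import Defs.
From Stdlib Require Import Reals Lra Psatz.
From Coquelicot Require Import Coquelicot.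
Open Scope R_scope.

Lemma mono_le (f df : R -> R) (a b : R) : a <= b ->
  (forall x, a <= x <= b -> is_derive f x (df x)) ->
  (forall x, a <= x <= b -> 0 <= df x) -> f a <= f b.
Proof.
  intros Hab Hd Hp.
  destruct (MVT_gen f a b df) as [c [Hc E]].
  - intros x Hx. apply Hd. rewrite Rmin_left in Hx by lra. rewrite Rmax_right in Hx by lra. lra.
  - intros x Hx. rewrite Rmin_left in Hx by lra. rewrite Rmax_right in Hx by lra.
    apply derivable_continuous_pt. exists (df x). apply is_derive_Reals. apply Hd. lra.
  - rewrite Rmin_left in Hc by lra. rewrite Rmax_right in Hc by lra.
    assert (0 <= df c) by (apply Hp; lra). nra.
Qed.


Lemma cos_le_dec (x y : R) : 0 <= x -> x <= y -> y <= PI -> cos y <= cos x.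
Proof.
  intros. destruct (Req_dec x y) as [->|]; [lra|].
  left. apply cos_decreasing_1; lra.
Qed.

Lemma sin_nonneg (x : R) : 0 <= x -> x <= PI -> 0 <= sin x.
Proof. intros. apply sin_ge_0; lra. Qed.

Lemma sin_k_le (k x : R) : 1 <= k -> 0 <= x -> k * x <= PI -> sin (k * x) <= k * sin x.
Proof.
  intros Hk Hx Hkx.
  assert (H := mono_le (fun t => k * sin t - sin (k*t)) (fun t => k * cos t - k * cos (k*t)) 0 x Hx).
  simpl in H. rewrite Rmult_0_r, sin_0 in H.
  enough (0 <= k * sin x - sin (k * x)) by lra.
  replace 0 with (k * 0 - 0) by ring. apply H.
  - intros t Ht. auto_derive. auto. ring.
  - intros t Ht. assert (cos (k*t) <= cos t) by (apply cos_le_dec; nra). nra.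
Qed.

Lemma m_nonneg (k x : R) : 1 <= k -> 0 <= x -> k * x <= PI ->
  0 <= sin (k*x) * cos x - k * cos (k*x) * sin x.
Proof.
  intros Hk Hx Hkx.
  assert (H := mono_le (fun t => sin (k*t) * cos t - k * cos (k*t) * sin t)
     (fun t => (k*k - 1) * sin (k*t) * sin t) 0 x Hx).
  simpl in H. rewrite Rmult_0_r, sin_0 in H.
  replace 0 with (0 * cos 0 - k * cos 0 * 0) by ring. apply H.
  - intros t Ht. auto_derive. auto. ring.
  - intros t Ht. assert (0 <= sin (k*t)) by (apply sin_nonneg; nra).
    assert (0 <= sin t) by (apply sin_nonneg; nra).
    assert (0 <= k*k-1) by nra.
    apply Rmult_le_pos; [apply Rmult_le_pos|]; lra.
Qed.

Lemma sin_ratio (k c e : R) : 1 <= k -> 0 <= c -> c <= e -> k * e <= PI / 2 ->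
  sin c * sin (k*e) <= sin (k*c) * sin e.
Proof.
  intros Hk Hc Hce Hke.
  destruct (Req_dec c 0) as [->|Hc0].
  { rewrite Rmult_0_r, sin_0, !Rmult_0_l. lra. }
  assert (HPI := PI_RGT_0).
  assert (Hs : forall t, c <= t <= e -> 0 < sin t) by (intros t Ht; apply sin_gt_0; nra).
  assert (H := mono_le (fun t => - (sin (k*t) / sin t))
     (fun t => (sin (k*t) * cos t - k * cos (k*t) * sin t) / (sin t * sin t)) c e Hce).
  simpl in H.
  assert (- (sin (k*c) / sin c) <= - (sin (k*e) / sin e)).
  { apply H.
    - intros t Ht. assert (0 < sin t) by (apply Hs; lra). auto_derive. lra. field. lra.
    - intros t Ht. assert (0 < sin t) by (apply Hs; lra).
      apply Rdiv_le_0_compat. apply m_nonneg; nra. nra. }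
  assert (0 < sin c) by (apply Hs; lra). assert (0 < sin e) by (apply Hs; lra).
  assert (Hq : sin (k*e) / sin e <= sin (k*c) / sin c) by lra.
  apply (Rmult_le_compat_r (sin c * sin e)) in Hq; [|nra].
  field_simplify in Hq; lra.
Qed.

Definition sh (x : R) := (exp x - exp (- x)) / 2.
Definition ch (x : R) := (exp x + exp (- x)) / 2.

Lemma ch2_sh2 (x : R) : ch x * ch x - sh x * sh x = 1.
Proof.
  unfold ch, sh. assert (exp x * exp (-x) = 1) by (rewrite <- exp_plus; replace (x + - x) with 0 by ring; apply exp_0).
  nra.
Qed.

Lemma sh_nonneg (x : R) : 0 <= x -> 0 <= sh x.
Proof. intros. unfold sh. assert (exp (-x) <= exp x). { destruct (Req_dec x 0). subst. rewrite Ropp_0; lra. left; apply exp_increasing; lra. } lra. Qed.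

Lemma sh_pos (x : R) : 0 < x -> 0 < sh x.
Proof. intros. unfold sh. assert (exp (-x) < exp x) by (apply exp_increasing; lra). lra. Qed.

Lemma ch_mono (x y : R) : 0 <= x -> x <= y -> ch x <= ch y.
Proof.
  intros Hx Hxy.
  apply (mono_le ch sh x y Hxy).
  - intros t Ht. unfold ch, sh. auto_derive. auto. field.
  - intros t Ht. apply sh_nonneg. lra.
Qed.

Lemma sh_k_ge (k x : R) : 1 <= k -> 0 <= x -> k * sh x <= sh (k * x).
Proof.
  intros Hk Hx.
  assert (H := mono_le (fun t => sh (k*t) - k * sh t) (fun t => k * ch (k*t) - k * ch t) 0 x Hx).
  simpl in H. rewrite Rmult_0_r in H. replace (sh 0) with 0 in H by (unfold sh; rewrite Ropp_0; field).
  enough (0 <= sh (k*x) - k * sh x) by lra.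
  replace 0 with (0 - k * 0) at 1 by ring. apply H.
  - intros t Ht. unfold sh, ch. auto_derive. auto. field.
  - intros t Ht. assert (ch t <= ch (k*t)) by (apply ch_mono; nra). nra.
Qed.

Lemma psi_nonneg (x : R) : 0 <= x -> 0 <= sh x * ch x - x.
Proof.
  intros Hx.
  assert (H := mono_le (fun t => sh t * ch t - t) (fun t => 2 * (sh t * sh t)) 0 x Hx).
  simpl in H. replace (sh 0) with 0 in H by (unfold sh; rewrite Ropp_0; field).
  replace 0 with (0 * ch 0 - 0) at 1 by ring. apply H.
  - intros t Ht. unfold sh, ch. auto_derive. auto.
    assert (exp t * exp (-t) = 1) by (rewrite <- exp_plus; replace (t + - t) with 0 by ring; apply exp_0).
    field_simplify. nra.
  - intros t Ht. nra.
Qed.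

Lemma phi_nonneg (x : R) : 0 <= x -> 0 <= sh x + sh x ^ 3 / 3 - x * ch x.
Proof.
  intros Hx.
  assert (H := mono_le (fun t => sh t + sh t ^ 3 / 3 - t * ch t) (fun t => sh t * (sh t * ch t - t)) 0 x Hx).
  simpl in H. replace (sh 0) with 0 in H by (unfold sh; rewrite Ropp_0; field).
  replace 0 with (0 + 0 ^ 3 / 3 - 0 * ch 0) at 1 by field. apply H.
  - intros t Ht. unfold sh, ch. auto_derive. auto. field.
  - intros t Ht. apply Rmult_le_pos. apply sh_nonneg; lra. apply psi_nonneg; lra.
Qed.

Lemma J_mono (k x : R) : 1 <= k -> 0 < x ->
  x^2 / (sh x)^2 + x^2/3 <= (k*x)^2 / (sh (k*x))^2 + (k*x)^2/3.
Proof.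
  intros Hk Hx.
  apply (mono_le (fun t => t^2 / (sh t)^2 + t^2/3)
     (fun t => (2*t/(sh t ^3)) * (sh t + sh t ^ 3 / 3 - t * ch t)) x (k*x)); [nra| |].
  - intros t Ht. assert (0 < sh t) by (apply sh_pos; lra).
    unfold sh, ch in *. auto_derive. intro Hc; nra. field. lra.
  - intros t Ht. assert (0 < sh t) by (apply sh_pos; lra).
    apply Rmult_le_pos. apply Rdiv_le_0_compat. lra. apply pow_lt; lra.
    apply phi_nonneg. lra.
Qed.

Lemma psi2_nonneg (x : R) : 0 <= x -> 0 <= x - sin x * cos x.
Proof.
  intros Hx.
  assert (H := mono_le (fun t => t - sin t * cos t) (fun t => 2 * (sin t * sin t)) 0 x Hx).
  simpl in H. rewrite sin_0 in H.
  replace 0 with (0 - 0 * cos 0) at 1 by ring. apply H.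
  - intros t Ht. auto_derive. auto. assert (H1 := sin2_cos2 t). unfold Rsqr in H1. nra.
  - intros t Ht. nra.
Qed.

Lemma phi2_nonneg (x : R) : 0 <= x -> x <= PI -> 0 <= sin x - x * cos x - sin x ^ 3 / 3.
Proof.
  intros Hx HxP.
  assert (H := mono_le (fun t => sin t - t * cos t - sin t ^ 3 / 3)
      (fun t => sin t * (t - sin t * cos t)) 0 x Hx).
  simpl in H. rewrite sin_0 in H.
  replace 0 with (0 - 0 * cos 0 - 0 ^ 3 / 3) at 1 by field. apply H.
  - intros t Ht. auto_derive. auto. field.
  - intros t Ht. apply Rmult_le_pos. apply sin_nonneg; lra. apply psi2_nonneg; lra.
Qed.

Lemma I_mono (k y : R) : 1 <= k -> 0 < y -> k * y < PI ->
  y^2 / (sin y)^2 - y^2/3 <= (k*y)^2 / (sin (k*y))^2 - (k*y)^2/3.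
Proof.
  intros Hk Hy Hky.
  apply (mono_le (fun t => t^2 / (sin t)^2 - t^2/3)
     (fun t => (2*t/(sin t ^3)) * (sin t - t * cos t - sin t ^ 3 / 3)) y (k*y)); [nra| |].
  - intros t Ht. assert (0 < sin t) by (apply sin_gt_0; lra).
    auto_derive. intro Hc; nra. field. lra.
  - intros t Ht. assert (0 < sin t) by (apply sin_gt_0; lra).
    apply Rmult_le_pos. apply Rdiv_le_0_compat. lra. apply pow_lt; lra.
    apply phi2_nonneg; lra.
Qed.


Lemma lower_alg (k p P s1 s2 s1' s2' : R) :
  0 <= p -> k*k*p <= P -> 0 <= s1 -> s1 <= s2 ->
  s2' - s1' <= k*k*(s2 - s1) -> s1 * s2' <= s1' * s2 ->
  (p+s1)*(P+s2') <= (P+s1')*(p+s2).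
Proof.
  intros. assert (p*(s2'-s1') <= p*(k*k*(s2-s1))) by (apply Rmult_le_compat_l; lra).
  assert ((k*k*p)*(s2-s1) <= P*(s2-s1)) by (apply Rmult_le_compat_r; lra).
  nra.
Qed.

Lemma core_alg (k p P s1 s2 s1' s2' sa sa' : R) :
  1 <= k -> 0 <= p -> k*k*p <= P -> 0 <= s1 -> s1 <= s2 -> 0 <= s1' -> 0 <= s2' ->
  s2' - s1' <= k*k*(s2 - s1) -> s1 * s2' <= s1' * s2 -> s1' <= k*k*s1 ->
  s2 <= sa -> sa' - s2' <= k*k*(sa - s2) -> s2 * sa' <= s2' * sa -> 0 < sa -> 0 < sa' ->
  (0 < p -> P*(p+sa)*sa' <= k*k*sa*p*(P+sa')) -> (p = 0 -> P = 0) ->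
  (p+s1)*(P+s2') <= (P+s1')*(p+s2) /\ (P+s1')*(p+s2)*sa' <= k*k*sa*(p+s1)*(P+s2').
Proof.
  intros Hk Hp HP Hs1 Hs12 Hs1' Hs2' Hii Hiii Hiv Hs2a Hii2 Hiii2 Hsa Hsa' HC HP0.
  split. { apply (lower_alg k); auto. }
  destruct (Req_dec p 0) as [Hp0|Hp0].
  { rewrite HP0 by auto. subst p.
    assert (s1' * (s2 * sa') <= (k*k*s1) * (s2' * sa)).
    { apply Rmult_le_compat; nra. }
    nra. }
  assert (Hpp : 0 < p) by lra.
  specialize (HC Hpp).
  assert (H1 : (P + s1') * p <= P * (p + s1)).
  { assert (s1' * p <= k*k*s1*p) by (apply Rmult_le_compat_r; lra).
    assert (k*k*p*s1 <= P*s1) by (apply Rmult_le_compat_r; lra). nra. }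
  assert (H2 : (p + s2)*(P + sa') <= (P + s2')*(p + sa)).
  { apply (lower_alg k); nra. }
  assert (H3 : (P+s1')*p * ((p+s2)*(P+sa')) <= P*(p+s1) * ((P+s2')*(p+sa))).
  { apply Rmult_le_compat; try nra. }
  assert (H4 : (p+s1)*(P+s2') * (P*(p+sa)*sa') <= (p+s1)*(P+s2')*(k*k*sa*p*(P+sa'))).
  { apply Rmult_le_compat_l. nra. exact HC. }
  assert (H5 : ((P+s1')*(p+s2)*sa') * (p*(P+sa')) <= (k*k*sa*(p+s1)*(P+s2')) * (p*(P+sa'))).
  { assert (0 <= sa') by lra.
    apply (Rmult_le_compat_r sa') in H3; [|lra]. nra. }
  apply Rmult_le_reg_r in H5; [exact H5|]. nra.
Qed.

Lemma sh_opp (x : R) : sh (- x) = - sh x.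
Proof. unfold sh. rewrite Ropp_involutive. field. Qed.

Lemma sh_sq_abs (x : R) : sh (Rabs x) ^ 2 = sh x ^ 2.
Proof. unfold Rabs. destruct (Rcase_abs x). rewrite sh_opp. ring. ring. Qed.

Lemma sh_zero (x : R) : sh x = 0 -> x = 0.
Proof.
  intros H. unfold sh in H. destruct (Rtotal_order x 0) as [Hx|[Hx|Hx]]; auto.
  - assert (exp x < exp (-x)) by (apply exp_increasing; lra). lra.
  - assert (exp (-x) < exp x) by (apply exp_increasing; lra). lra.
Qed.

Lemma sin_sq_diff (X Y : R) : sin X ^ 2 - sin Y ^ 2 = sin (X + Y) * sin (X - Y).
Proof.
  rewrite sin_plus, sin_minus. assert (H1 := sin2_cos2 X). assert (H2 := sin2_cos2 Y).
  unfold Rsqr in *. nra.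
Qed.

Lemma F_ii (k c e : R) : 1 <= k -> 0 <= c -> c <= e -> k * e <= PI / 2 ->
  sin (k*e) ^ 2 - sin (k*c) ^ 2 <= k*k*(sin e ^ 2 - sin c ^ 2).
Proof.
  intros Hk Hc Hce Hke. assert (HPI := PI_RGT_0).
  rewrite !sin_sq_diff.
  replace (k*e + k*c) with (k*(e+c)) by ring. replace (k*e - k*c) with (k*(e-c)) by ring.
  assert (H1 := sin_k_le k (e+c) Hk ltac:(lra) ltac:(nra)).
  assert (H2 := sin_k_le k (e-c) Hk ltac:(lra) ltac:(nra)).
  assert (0 <= sin (k*(e+c))) by (apply sin_nonneg; nra).
  assert (0 <= sin (k*(e-c))) by (apply sin_nonneg; nra).
  assert (sin (k*(e+c)) * sin (k*(e-c)) <= (k * sin (e+c)) * (k * sin (e-c))) by (apply Rmult_le_compat; lra).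
  nra.
Qed.

Lemma F_iii (k c e : R) : 1 <= k -> 0 <= c -> c <= e -> k * e <= PI / 2 ->
  sin c ^ 2 * sin (k*e) ^ 2 <= sin (k*c) ^ 2 * sin e ^ 2.
Proof.
  intros Hk Hc Hce Hke. assert (HPI := PI_RGT_0).
  assert (H := sin_ratio k c e Hk Hc Hce Hke).
  assert (0 <= sin c) by (apply sin_nonneg; nra).
  assert (0 <= sin (k*e)) by (apply sin_nonneg; nra).
  assert (0 <= sin c * sin (k*e)) by nra.
  assert ((sin c * sin (k*e)) * (sin c * sin (k*e)) <= (sin (k*c) * sin e) * (sin (k*c) * sin e)) by (apply Rmult_le_compat; lra).
  nra.
Qed.

Lemma core_trig (k al x c e : R) : 1 <= k -> 0 < al -> k * al <= PI ->
  0 <= c -> c <= e -> 0 < e -> e <= al / 2 ->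
  let p := sh x ^ 2 in let P := sh (k*x) ^ 2 in
  let s1 := sin c ^ 2 in let s2 := sin e ^ 2 in
  let s1' := sin (k*c) ^ 2 in let s2' := sin (k*e) ^ 2 in
  let sa := sin (al/2) ^ 2 in let sa' := sin (k*(al/2)) ^ 2 in
  (p+s1)*(P+s2') <= (P+s1')*(p+s2) /\ (P+s1')*(p+s2)*sa' <= k*k*sa*(p+s1)*(P+s2').
Proof.
  intros Hk Hal Hkal Hc Hce He Hea p P s1 s2 s1' s2' sa sa'.
  assert (HPI := PI_RGT_0).
  assert (Hke : k * e <= PI/2) by nra.
  assert (Hka : k * (al/2) <= PI/2) by nra.
  assert (Hsc : 0 <= sin c) by (apply sin_nonneg; nra).
  assert (Hskc : 0 <= sin (k*c)) by (apply sin_nonneg; nra).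
  assert (Hsce : sin c <= sin e) by (apply sin_incr_1; nra).
  assert (Hsea : sin e <= sin (al/2)) by (apply sin_incr_1; nra).
  assert (Hsa : 0 < sin (al/2)) by (apply sin_gt_0; nra).
  assert (Hsa' : 0 < sin (k*(al/2))) by (apply sin_gt_0; nra).
  assert (Hshk := sh_k_ge k (Rabs x) Hk (Rabs_pos x)).
  assert (Hsh0 := sh_nonneg (Rabs x) (Rabs_pos x)).
  assert (HkP : k*k*p <= P).
  { unfold p, P. rewrite <- (sh_sq_abs x), <- (sh_sq_abs (k*x)).
    rewrite Rabs_mult, (Rabs_right k) by lra.
    assert ((k * sh (Rabs x)) * (k * sh (Rabs x)) <= sh (k * Rabs x) * sh (k * Rabs x)) by (apply Rmult_le_compat; nra).
    nra. }
  apply (core_alg k); unfold p, P, s1, s2, s1', s2', sa, sa'.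
  - lra.
  - nra.
  - exact HkP.
  - nra.
  - nra.
  - nra.
  - nra.
  - apply F_ii; lra.
  - apply F_iii; lra.
  - assert (H := sin_k_le k c Hk Hc ltac:(nra)).
    assert (sin (k*c) * sin (k*c) <= (k*sin c) * (k * sin c)) by (apply Rmult_le_compat; lra). nra.
  - nra.
  - apply F_ii; lra.
  - apply F_iii; lra.
  - nra.
  - nra.
  - intros Hp.
    assert (Hx0 : x <> 0). { intros ->. unfold sh in Hp. rewrite Ropp_0 in Hp. lra. }
    set (z := Rabs x). assert (Hz : 0 < z) by (apply Rabs_pos_lt; auto).
    assert (Ep : sh z ^ 2 = sh x ^ 2) by apply sh_sq_abs.
    assert (EP : sh (k*z) ^ 2 = sh (k*x) ^ 2).
    { unfold z. rewrite <- (sh_sq_abs (k*x)). rewrite Rabs_mult, (Rabs_right k) by lra. reflexivity. }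
    assert (Hshz : 0 < sh z) by (apply sh_pos; lra).
    assert (Hshkz : 0 < sh (k*z)) by (apply sh_pos; nra).
    assert (HJ := J_mono k z Hk Hz).
    assert (HI := I_mono k (al/2) Hk ltac:(lra) ltac:(nra)).
    rewrite Ep, EP in HJ.
    set (q := sh x ^ 2) in *. set (Q := sh (k*x) ^ 2) in *.
    set (u := sin (al/2) ^ 2) in *. set (u' := sin (k*(al/2)) ^ 2) in *.
    assert (Hq : 0 < q) by exact Hp.
    assert (HQ : 0 < Q) by (rewrite <- EP; nra).
    assert (Hu : 0 < u) by (unfold u; nra).
    assert (Hu' : 0 < u') by (unfold u'; nra).
    assert (J' : 1/q + 1/3 <= k*k/Q + k*k/3).
    { apply (Rmult_le_reg_l (z^2)). nra.
      replace (z^2 * (1/q + 1/3)) with (z^2/q + z^2/3) by (field; lra).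
      replace (z^2 * (k*k/Q + k*k/3)) with ((k*z)^2/Q + (k*z)^2/3) by (field; lra). exact HJ. }
    assert (I' : 1/u - 1/3 <= k*k/u' - k*k/3).
    { apply (Rmult_le_reg_l ((al/2)^2)). nra.
      replace ((al/2)^2 * (1/u - 1/3)) with ((al/2)^2/u - (al/2)^2/3) by (field; lra).
      replace ((al/2)^2 * (k*k/u' - k*k/3)) with ((k*(al/2))^2/u' - (k*(al/2))^2/3) by (field; lra). exact HI. }
    assert (E : (k*k/Q + k*k/u' - (1/q + 1/u)) * (q*Q*u*u') = k*k*u*q*(Q+u') - Q*(q+u)*u')
      by (field; lra).
    assert (0 <= (k*k/Q + k*k/u' - (1/q + 1/u)) * (q*Q*u*u')).
    { apply Rmult_le_pos. lra. assert (0 < q*Q) by nra. assert (0 < q*Q*u) by nra. nra. }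
    lra.
  - intros Hp. assert (sh x = 0) by (unfold p in Hp; nra).
    apply sh_zero in H. subst x. rewrite Rmult_0_r. unfold sh. rewrite Ropp_0. field.
Qed.


Lemma Cminus_pair (a b c d : R) : ((a,b) - (c,d))%C = (a - c, b - d).
Proof. unfold Cminus, Cplus, Copp. simpl. f_equal; ring. Qed.

Lemma mid_pair (a b c d : R) : (((a,b) + (c,d)) / RtoC 2)%C = ((a+c)/2, (b+d)/2).
Proof. unfold Cdiv, Cplus, Cmult, Cinv, RtoC. simpl. f_equal; field. Qed.

Lemma Cmod_pair (a b : R) : Cmod (a,b) = sqrt (a*a + b*b).
Proof. unfold Cmod. simpl. f_equal. ring. Qed.

Lemma sqrt_sq_le (u v : R) : 0 <= v -> u * u <= v -> u <= sqrt v.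
Proof.
  intros Hv H. destruct (Rle_dec u 0). { assert (0 <= sqrt v) by apply sqrt_pos. lra. }
  rewrite <- (sqrt_square u) by lra. apply sqrt_le_1; nra.
Qed.

Definition Ln (n1 n2 : R) (z : C) := n1 * fst z + n2 * snd z.

Lemma Ln_lip (n1 n2 : R) (u v : C) : n1*n1 + n2*n2 = 1 ->
  Ln n1 n2 u - Ln n1 n2 v <= Cmod (u - v).
Proof.
  intros Hn. destruct u as [u1 u2], v as [v1 v2]. rewrite Cminus_pair, Cmod_pair. unfold Ln; simpl.
  apply sqrt_sq_le. { pose proof (Rle_0_sqr (u1 - v1)); pose proof (Rle_0_sqr (u2-v2)); unfold Rsqr in *; lra. }
  assert (0 <= (n1*(u2-v2) - n2*(u1-v1))^2) by (apply pow2_ge_0).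
  assert (E : (n1 * u1 + n2 * u2 - (n1 * v1 + n2 * v2)) * (n1 * u1 + n2 * u2 - (n1 * v1 + n2 * v2))
     + (n1*(u2-v2) - n2*(u1-v1))^2 = (n1*n1+n2*n2) * ((u1 - v1) * (u1 - v1) + (u2 - v2) * (u2 - v2))) by ring.
  rewrite Hn in E. lra.
Qed.

Lemma sector_iff (th : R) (z : C) : 0 < th -> th <= PI ->
  (sector th z <-> 0 < snd z /\ 0 < Ln (sin th) (- cos th) z).
Proof.
  intros Hth HthP. unfold sector, Ln. split.
  - intros [Hz [phi [Hphi E]]].
    assert (Hr : 0 < Cmod z).
    { destruct (Rle_lt_or_eq_dec 0 (Cmod z) (Cmod_ge_0 z)) as [|H]; auto.
      exfalso. apply Hz. apply Cmod_eq_0. auto. }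
    rewrite E; simpl. split.
    + apply Rmult_lt_0_compat; auto. apply sin_gt_0; lra.
    + replace (sin th * (Cmod z * cos phi) + - cos th * (Cmod z * sin phi)) with (Cmod z * sin (th - phi))
        by (rewrite sin_minus; ring).
      apply Rmult_lt_0_compat; auto. apply sin_gt_0; lra.
  - destruct z as [a b]; simpl. intros [Hb Hl].
    assert (Hr : Cmod (a,b) = sqrt (a*a+b*b)) by apply Cmod_pair.
    set (r := Cmod (a,b)) in *.
    assert (Hr2 : r * r = a*a + b*b) by (rewrite Hr; apply sqrt_sqrt; nra).
    assert (Hrp : 0 < r) by (rewrite Hr; apply sqrt_lt_R0; nra).
    assert (Hab : -1 <= a / r <= 1).
    { assert (Ha : -r <= a <= r) by nra.
      split; apply (Rmult_le_reg_r r); auto; replace (a/r*r) with a by (field; lra); lra. }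
    split. { intros H. injection H; intros; lra. }
    set (phi := acos (a/r)).
    assert (Hc : cos phi = a / r) by (apply cos_acos; auto).
    assert (Hs : sin phi = b / r).
    { unfold phi. rewrite sin_acos by auto.
      replace (1 - (a/r)²) with ((b/r)*(b/r)) by (unfold Rsqr; apply (Rmult_eq_reg_r (r*r)); [|nra]; field_simplify; lra).
      apply sqrt_square. apply Rdiv_le_0_compat; lra. }
    assert (Hbd := acos_bound (a/r)). fold phi in Hbd.
    assert (Hsp : 0 < sin phi) by (rewrite Hs; apply Rdiv_lt_0_compat; lra).
    exists phi. split; [split|].
    + destruct (Req_dec phi 0) as [E|]; [rewrite E, sin_0 in Hsp; lra|lra].
    + destruct (Rlt_le_dec phi th); auto. exfalso.
      assert (E : sin th * a + - cos th * b = r * sin (th - phi)).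
      { rewrite sin_minus, Hc, Hs. field. lra. }
      assert (sin (th - phi) <= 0).
      { replace (th - phi) with (- (phi - th)) by ring. rewrite sin_neg.
        assert (0 <= sin (phi - th)) by (apply sin_ge_0; lra). lra. }
      nra.
    + rewrite Hc, Hs. f_equal; field; lra.
Qed.

Lemma Cmod_sq (z : C) : Cmod z * Cmod z = fst z * fst z + snd z * snd z.
Proof.
  destruct z as [a b]. rewrite Cmod_pair. simpl. apply sqrt_sqrt.
  pose proof (Rle_0_sqr a); pose proof (Rle_0_sqr b); unfold Rsqr in *; lra.
Qed.

Lemma Cmod_sym (u v : C) : Cmod (u - v) = Cmod (v - u).
Proof. destruct u, v. rewrite !Cminus_pair, !Cmod_pair. f_equal. ring. Qed.

Lemma sqrt_lt_of_sq (X e : R) : 0 <= X -> 0 < e -> X < e * e -> sqrt X < e.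
Proof.
  intros. rewrite <- (sqrt_square e) by lra. apply sqrt_lt_1_alt. lra.
Qed.

Lemma Cmod_eq_of_sq (z : C) (d : R) : 0 <= d -> fst z * fst z + snd z * snd z = d * d -> Cmod z = d.
Proof. intros. destruct z. rewrite Cmod_pair. simpl in *. rewrite H0. apply sqrt_square. auto. Qed.

Definition HP (n1 n2 m1 m2 : R) (G : C -> Prop) : Prop :=
  n1*n1+n2*n2 = 1 /\ m1*m1+m2*m2 = 1 /\ -1 < n1*m1+n2*m2 /\
  (forall z, G z <-> 0 < Ln n1 n2 z /\ 0 < Ln m1 m2 z).

Lemma HP_swap n1 n2 m1 m2 G : HP n1 n2 m1 m2 G -> HP m1 m2 n1 n2 G.
Proof.
  intros [Hn [Hm [Hnm HG]]]. split; [auto|split;[auto|split]]. lra. intros z; rewrite HG; tauto.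
Qed.

Lemma ip_le1 n1 n2 m1 m2 : n1*n1+n2*n2 = 1 -> m1*m1+m2*m2 = 1 -> n1*m1+n2*m2 <= 1.
Proof. intros. assert (0 <= (n1-m1)*(n1-m1) + (n2-m2)*(n2-m2)).
  { pose proof (Rle_0_sqr (n1 - m1)); pose proof (Rle_0_sqr (n2-m2)); unfold Rsqr in *; lra. } nra. Qed.

Lemma GB1 n1 n2 m1 m2 G z : HP n1 n2 m1 m2 G -> boundary G z ->
  0 <= Ln n1 n2 z /\ 0 <= Ln m1 m2 z /\ (Ln n1 n2 z <= 0 \/ Ln m1 m2 z <= 0).
Proof.
  intros [Hn [Hm [Hnm HG]]] Hb.
  assert (Cl : forall p1 p2, p1*p1+p2*p2 = 1 -> (forall a, G a -> 0 < Ln p1 p2 a) -> 0 <= Ln p1 p2 z).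
  { intros p1 p2 Hp HGp. destruct (Rle_lt_dec 0 (Ln p1 p2 z)) as [|Hl]; auto. exfalso.
    destruct (Hb (- Ln p1 p2 z) ltac:(lra)) as [[a [Ha Haz]] _].
    assert (H1 := Ln_lip p1 p2 a z Hp). assert (H2 := HGp a Ha). lra. }
  assert (C1 : 0 <= Ln n1 n2 z) by (apply Cl; auto; intros a Ha; apply HG; auto).
  assert (C2 : 0 <= Ln m1 m2 z) by (apply Cl; auto; intros a Ha; apply HG; auto).
  repeat split; auto.
  destruct (Rle_lt_dec (Ln n1 n2 z) 0); auto. destruct (Rle_lt_dec (Ln m1 m2 z) 0); auto.
  exfalso. destruct (Hb (Rmin (Ln n1 n2 z) (Ln m1 m2 z))) as [_ [b [Hb1 Hb2]]].
  { apply Rmin_glb_lt; auto. }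
  apply Hb1. apply HG. rewrite Cmod_sym in Hb2.
  assert (H1 := Ln_lip n1 n2 z b Hn). assert (H2 := Ln_lip m1 m2 z b Hm).
  assert (Rmin (Ln n1 n2 z) (Ln m1 m2 z) <= Ln n1 n2 z) by apply Rmin_l.
  assert (Rmin (Ln n1 n2 z) (Ln m1 m2 z) <= Ln m1 m2 z) by apply Rmin_r.
  lra.
Qed.

Lemma GB2 n1 n2 m1 m2 G z : HP n1 n2 m1 m2 G -> 0 <= Ln m1 m2 z -> Ln n1 n2 z = 0 -> boundary G z.
Proof.
  intros [Hn [Hm [Hnm HG]]] Hmz Hnz eps Heps.
  destruct z as [z1 z2].
  set (lam := eps/4). set (d1 := n1 + m1). set (d2 := n2 + m2).
  assert (Hip := ip_le1 n1 n2 m1 m2 Hn Hm).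
  assert (Hd : d1*d1+d2*d2 <= 4) by (unfold d1, d2; nra).
  assert (Hdist : forall s, s = 1 \/ s = -1 -> Cmod ((z1 + s*lam*d1, z2 + s*lam*d2) - (z1,z2)) < eps).
  { intros s Hs. rewrite Cminus_pair, Cmod_pair. apply sqrt_lt_of_sq; try lra.
    - pose proof (Rle_0_sqr (z1 + s * lam * d1 - z1)); pose proof (Rle_0_sqr (z2 + s * lam * d2 - z2)); unfold Rsqr in *; lra.
    - replace ((z1 + s * lam * d1 - z1) * (z1 + s * lam * d1 - z1) + (z2 + s * lam * d2 - z2) * (z2 + s * lam * d2 - z2))
       with ((s*s)*(lam*lam)*(d1*d1+d2*d2)) by ring.
      assert (s*s = 1) by (destruct Hs; subst; ring). rewrite H.
      unfold lam. assert (0 <= eps/4*(eps/4)) by nra. nra. }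
  unfold Ln in *; simpl in *.
  split.
  - exists (z1 + 1*lam*d1, z2 + 1*lam*d2). split; [|apply Hdist; auto].
    apply HG. unfold Ln; simpl. unfold d1, d2, lam. split; nra.
  - exists (z1 + -1*lam*d1, z2 + -1*lam*d2). split; [|apply Hdist; auto].
    intros Hb. apply HG in Hb. unfold Ln in Hb; simpl in Hb. unfold d1, d2, lam in Hb. nra.
Qed.

Lemma Rinf_ge (S : R -> Prop) (m : R) : (exists r, S r) -> (forall r, S r -> m <= r) -> m <= Rinf S.
Proof.
  intros [r0 Hr0] Hm. unfold Rinf.
  destruct (Glb_Rbar_correct S) as [H1 H2].
  assert (A1 := H1 r0 Hr0). assert (A2 := H2 (Finite m) ltac:(intros r Hr; simpl; apply Hm; auto)).
  destruct (Glb_Rbar S) as [l| |]; simpl in *; auto; try contradiction.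
Qed.

Lemma Rinf_le (S : R -> Prop) (m r0 : R) : (forall r, S r -> m <= r) -> S r0 -> Rinf S <= r0.
Proof.
  intros Hm Hr0. unfold Rinf.
  destruct (Glb_Rbar_correct S) as [H1 H2].
  assert (A1 := H1 r0 Hr0). assert (A2 := H2 (Finite m) ltac:(intros r Hr; simpl; apply Hm; auto)).
  destruct (Glb_Rbar S) as [l| |]; simpl in *; auto; try contradiction.
Qed.

Lemma Rinf_eq (S : R -> Prop) (m : R) : S m -> (forall r, S r -> m <= r) -> Rinf S = m.
Proof.
  intros Hm Hl. apply Rle_antisym. apply (Rinf_le S m); auto. apply Rinf_ge; eauto.
Qed.

Definition proj (n1 n2 : R) (x : C) : C := (fst x - Ln n1 n2 x * n1, snd x - Ln n1 n2 x * n2).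
Definition refl (n1 n2 : R) (x : C) : C := (fst x - 2 * Ln n1 n2 x * n1, snd x - 2 * Ln n1 n2 x * n2).

Lemma proj_bd n1 n2 m1 m2 G x : HP n1 n2 m1 m2 G -> G x -> Ln n1 n2 x <= Ln m1 m2 x ->
  boundary G (proj n1 n2 x) /\ Cmod (x - proj n1 n2 x) = Ln n1 n2 x.
Proof.
  intros HH Gx Hle. pose proof HH as [Hn [Hm [Hnm HG]]].
  apply HG in Gx. destruct Gx as [Gn Gm].
  assert (Hip := ip_le1 n1 n2 m1 m2 Hn Hm).
  destruct x as [x1 x2]. unfold proj, Ln in *; simpl in *.
  split.
  - apply (GB2 n1 n2 m1 m2); auto; unfold Ln; simpl.
    + set (L := n1 * x1 + n2 * x2) in *.
      replace (m1 * (x1 - L * n1) + m2 * (x2 - L * n2)) with ((m1*x1+m2*x2) - L*(n1*m1+n2*m2)) by ring.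
      destruct (Rle_lt_dec (n1*m1+n2*m2) 0); nra.
    + set (L := n1 * x1 + n2 * x2) in *.
      replace (n1 * (x1 - L * n1) + n2 * (x2 - L * n2)) with (L - L*(n1*n1+n2*n2)) by (unfold L; ring).
      rewrite Hn. ring.
  - rewrite Cminus_pair. apply Cmod_eq_of_sq. lra. simpl.
    set (L := n1 * x1 + n2 * x2) in *.
    replace ((x1 - (x1 - L * n1)) * (x1 - (x1 - L * n1)) + (x2 - (x2 - L * n2)) * (x2 - (x2 - L * n2)))
      with (L*L*(n1*n1+n2*n2)) by ring. rewrite Hn. ring.
Qed.

Lemma dG_eq n1 n2 m1 m2 G x : HP n1 n2 m1 m2 G -> G x ->
  dG G x = Rmin (Ln n1 n2 x) (Ln m1 m2 x).
Proof.
  intros HH Gx. unfold dG. apply Rinf_eq.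
  - destruct (Rle_lt_dec (Ln n1 n2 x) (Ln m1 m2 x)) as [Hl|Hl].
    + destruct (proj_bd n1 n2 m1 m2 G x HH Gx Hl) as [Hb Hd].
      exists (proj n1 n2 x). split; auto. rewrite Hd. rewrite Rmin_left; auto.
    + destruct (proj_bd m1 m2 n1 n2 G x (HP_swap _ _ _ _ _ HH) Gx ltac:(lra)) as [Hb Hd].
      exists (proj m1 m2 x). split; auto. rewrite Hd. rewrite Rmin_right; lra.
  - intros r [z [Hz ->]]. pose proof HH as [Hn [Hm _]].
    destruct (GB1 n1 n2 m1 m2 G z HH Hz) as [_ [_ [H|H]]].
    + assert (H1 := Ln_lip n1 n2 x z Hn). assert (Rmin (Ln n1 n2 x) (Ln m1 m2 x) <= Ln n1 n2 x) by apply Rmin_l. lra.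
    + assert (H1 := Ln_lip m1 m2 x z Hm). assert (Rmin (Ln n1 n2 x) (Ln m1 m2 x) <= Ln m1 m2 x) by apply Rmin_r. lra.
Qed.

Lemma cs2 (n1 n2 a b : R) : n1*n1+n2*n2 = 1 -> (n1*a+n2*b)*(n1*a+n2*b) <= a*a+b*b.
Proof.
  intros Hn. assert (E : (n1*a+n2*b)*(n1*a+n2*b) + (n1*b - n2*a)*(n1*b-n2*a) = (n1*n1+n2*n2)*(a*a+b*b)) by ring.
  rewrite Hn in E. pose proof (Rle_0_sqr (n1*b - n2*a)). unfold Rsqr in *. lra.
Qed.

Lemma tilde_case n1 n2 m1 m2 G x xt : HP n1 n2 m1 m2 G -> G x ->
  Cmod (xt - x) = 2 * Rmin (Ln n1 n2 x) (Ln m1 m2 x) ->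
  Ln n1 n2 (((x + xt) / RtoC 2)%C) <= 0 ->
  Ln n1 n2 x <= Ln m1 m2 x /\ xt = refl n1 n2 x.
Proof.
  intros HH Gx Hd HM. pose proof HH as [Hn [Hm [Hnm HG]]].
  apply HG in Gx. destruct Gx as [Gn Gm].
  set (d := Rmin (Ln n1 n2 x) (Ln m1 m2 x)) in *.
  assert (Hd1 : d <= Ln n1 n2 x) by apply Rmin_l.
  assert (Hd2 : d <= Ln m1 m2 x) by apply Rmin_r.
  assert (Hd0 : 0 < d) by (apply Rmin_glb_lt; auto).
  assert (HW := Cmod_sq (xt - x)). rewrite Hd in HW.
  destruct x as [x1 x2], xt as [t1 t2]. rewrite mid_pair in HM. rewrite Cminus_pair in HW.
  unfold refl, Ln in *; simpl in *.
  set (a := x1 - t1) in *. set (b := x2 - t2) in *.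
  assert (HW' : a*a+b*b = 4*d*d) by (unfold a, b; nra).
  assert (Hs : d <= (n1*a+n2*b)/2) by (unfold a, b; lra).
  assert (Hcs := cs2 n1 n2 a b Hn).
  assert (Hsd : (n1*a+n2*b)/2 = d) by nra.
  assert (E0 : (a - 2*d*n1)*(a - 2*d*n1) + (b - 2*d*n2)*(b-2*d*n2) = 0).
  { replace ((a - 2*d*n1)*(a - 2*d*n1) + (b - 2*d*n2)*(b-2*d*n2)) with
      ((a*a+b*b) - 4*d*((n1*a+n2*b)/2)*2 + 4*d*d*(n1*n1+n2*n2)) by field.
    rewrite HW', Hsd, Hn. ring. }
  apply Rplus_sqr_eq_0 in E0. destruct E0 as [E1 E2].
  assert (HL : n1 * x1 + n2 * x2 = d) by (unfold a, b in *; lra).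
  split. lra.
  rewrite HL. f_equal; unfold a, b in *; lra.
Qed.

Lemma tilde_char n1 n2 m1 m2 G x xt : HP n1 n2 m1 m2 G -> G x -> tildeSet G x xt ->
  (Ln n1 n2 x <= Ln m1 m2 x /\ xt = refl n1 n2 x) \/ (Ln m1 m2 x <= Ln n1 n2 x /\ xt = refl m1 m2 x).
Proof.
  intros HH Gx [Hd Hb]. rewrite (dG_eq n1 n2 m1 m2 G x HH Gx) in Hd.
  destruct (GB1 n1 n2 m1 m2 G _ HH Hb) as [_ [_ [H|H]]].
  - left. apply (tilde_case n1 n2 m1 m2 G); auto.
  - right. apply (tilde_case m1 m2 n1 n2 G); auto. apply HP_swap; auto. rewrite Rmin_comm; auto.
Qed.

Lemma tilde_refl n1 n2 m1 m2 G x : HP n1 n2 m1 m2 G -> G x -> Ln n1 n2 x <= Ln m1 m2 x ->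
  tildeSet G x (refl n1 n2 x).
Proof.
  intros HH Gx Hl. pose proof HH as [Hn [Hm [Hnm HG]]].
  destruct (proj_bd n1 n2 m1 m2 G x HH Gx Hl) as [Hb _].
  assert (Gx' := Gx). apply HG in Gx'. destruct Gx' as [Gn Gm].
  split.
  - rewrite (dG_eq n1 n2 m1 m2 G x HH Gx), Rmin_left by auto.
    destruct x as [x1 x2]. unfold refl. rewrite Cminus_pair. apply Cmod_eq_of_sq. lra.
    unfold Ln in *; simpl in *. set (L := n1 * x1 + n2 * x2) in *.
    replace ((x1 - 2 * L * n1 - x1) * (x1 - 2 * L * n1 - x1) + (x2 - 2 * L * n2 - x2) * (x2 - 2 * L * n2 - x2))
      with (4*L*L*(n1*n1+n2*n2)) by ring. rewrite Hn. ring.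
  - destruct x as [x1 x2]. unfold refl. rewrite mid_pair.
    replace (((x1 + (fst (x1, x2) - 2 * Ln n1 n2 (x1, x2) * n1)) / 2,
     (x2 + (snd (x1, x2) - 2 * Ln n1 n2 (x1, x2) * n2)) / 2)) with (proj n1 n2 (x1,x2)); auto.
    unfold proj. simpl. f_equal; field.
Qed.

Lemma dist_refl n1 n2 x y : n1*n1+n2*n2 = 1 ->
  Cmod (y - refl n1 n2 x) * Cmod (y - refl n1 n2 x) = Cmod (y - x) * Cmod (y - x) + 4 * (Ln n1 n2 x * Ln n1 n2 y).
Proof.
  intros Hn. destruct x as [x1 x2], y as [y1 y2]. unfold refl.
  rewrite !Cminus_pair, !Cmod_sq. unfold Ln. simpl.
  replace ((y1 - (x1 - 2 * (n1 * x1 + n2 * x2) * n1)) * (y1 - (x1 - 2 * (n1 * x1 + n2 * x2) * n1)) +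
   (y2 - (x2 - 2 * (n1 * x1 + n2 * x2) * n2)) * (y2 - (x2 - 2 * (n1 * x1 + n2 * x2) * n2)))
  with ((y1 - x1) * (y1 - x1) + (y2 - x2) * (y2 - x2) + 4 * (n1 * x1 + n2 * x2) * (n1*(y1-x1) + n2*(y2-x2))
        + 4 * (n1 * x1 + n2 * x2)*(n1 * x1 + n2 * x2)*(n1*n1+n2*n2)) by ring.
  rewrite Hn. ring.
Qed.

Lemma sqrt_le_of_sq (X r : R) : 0 <= r -> X <= r * r -> sqrt X <= r.
Proof.
  intros Hr H. rewrite <- (sqrt_square r) by lra.
  destruct (Rle_lt_dec X 0). { rewrite (sqrt_neg_0 X) by lra. apply sqrt_pos. }
  apply sqrt_le_1; nra.
Qed.

Definition setA (G : C -> Prop) (x y : C) := fun r => exists yt, tildeSet G y yt /\ r = Cmod (x - yt).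

Lemma setA_lb n1 n2 m1 m2 G x y : HP n1 n2 m1 m2 G -> G x -> G y -> forall r, setA G x y r ->
  sqrt (Cmod (x - y) * Cmod (x - y) + 4 * Rmin (Ln n1 n2 x * Ln n1 n2 y) (Ln m1 m2 x * Ln m1 m2 y)) <= r.
Proof.
  intros HH Gx Gy r [yt [Ht ->]]. pose proof HH as [Hn [Hm _]].
  apply sqrt_le_of_sq. apply Cmod_ge_0.
  destruct (tilde_char n1 n2 m1 m2 G y yt HH Gy Ht) as [[_ ->]|[_ ->]].
  - rewrite dist_refl by auto. assert (Rmin (Ln n1 n2 x * Ln n1 n2 y) (Ln m1 m2 x * Ln m1 m2 y) <= Ln n1 n2 x * Ln n1 n2 y) by apply Rmin_l. nra.
  - rewrite dist_refl by auto. assert (Rmin (Ln n1 n2 x * Ln n1 n2 y) (Ln m1 m2 x * Ln m1 m2 y) <= Ln m1 m2 x * Ln m1 m2 y) by apply Rmin_r. nra.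
Qed.

Lemma setA_ne n1 n2 m1 m2 G x y : HP n1 n2 m1 m2 G -> G y -> exists r, setA G x y r.
Proof.
  intros HH Gy. destruct (Rle_lt_dec (Ln n1 n2 y) (Ln m1 m2 y)).
  - exists (Cmod (x - refl n1 n2 y)). exists (refl n1 n2 y). split; auto. apply (tilde_refl n1 n2 m1 m2); auto.
  - exists (Cmod (x - refl m1 m2 y)). exists (refl m1 m2 y). split; auto. apply (tilde_refl m1 m2 n1 n2); auto.
    apply HP_swap; auto. lra.
Qed.

Lemma setA_le0 G x y : forall r, setA G x y r -> 0 <= r.
Proof. intros r [yt [_ ->]]. apply Cmod_ge_0. Qed.

Lemma attain n1 n2 m1 m2 G x y : HP n1 n2 m1 m2 G -> G x -> G y ->
  Ln n1 n2 x * Ln n1 n2 y <= Ln m1 m2 x * Ln m1 m2 y ->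
  Rinf (setA G x y) <= sqrt (Cmod (x - y) * Cmod (x - y) + 4 * (Ln n1 n2 x * Ln n1 n2 y)) \/
  Rinf (setA G y x) <= sqrt (Cmod (x - y) * Cmod (x - y) + 4 * (Ln n1 n2 x * Ln n1 n2 y)).
Proof.
  intros HH Gx Gy Hle. pose proof HH as [Hn [Hm [_ HG]]].
  assert (Gx' := Gx). apply HG in Gx'. assert (Gy' := Gy). apply HG in Gy'.
  destruct (Rle_lt_dec (Ln n1 n2 y) (Ln m1 m2 y)).
  - left. apply (Rinf_le _ 0). apply setA_le0.
    replace (sqrt (Cmod (x - y) * Cmod (x - y) + 4 * (Ln n1 n2 x * Ln n1 n2 y))) with (Cmod (x - refl n1 n2 y)).
    + exists (refl n1 n2 y). split; auto. apply (tilde_refl n1 n2 m1 m2); auto.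
    + rewrite (Rmult_comm (Ln n1 n2 x)), <- dist_refl by auto. rewrite sqrt_square; auto. apply Cmod_ge_0.
  - right. apply (Rinf_le _ 0). apply setA_le0.
    assert (Ln n1 n2 x <= Ln m1 m2 x).
    { destruct (Rle_lt_dec (Ln n1 n2 x) (Ln m1 m2 x)); auto. exfalso.
      destruct Gx', Gy'. assert (Ln m1 m2 x * Ln m1 m2 y < Ln n1 n2 x * Ln m1 m2 y) by (apply Rmult_lt_compat_r; lra).
      assert (Ln n1 n2 x * Ln m1 m2 y < Ln n1 n2 x * Ln n1 n2 y) by (apply Rmult_lt_compat_l; lra). lra. }
    replace (sqrt (Cmod (x - y) * Cmod (x - y) + 4 * (Ln n1 n2 x * Ln n1 n2 y))) with (Cmod (y - refl n1 n2 x)).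
    + exists (refl n1 n2 x). split; auto. apply (tilde_refl n1 n2 m1 m2); auto.
    + rewrite <- (sqrt_square (Cmod (y - refl n1 n2 x))) by apply Cmod_ge_0. rewrite dist_refl by auto. rewrite Cmod_sym. reflexivity.
Qed.

Lemma wG_eq n1 n2 m1 m2 G x y : HP n1 n2 m1 m2 G -> G x -> G y ->
  wG G x y = Cmod (x - y) / sqrt (Cmod (x - y) * Cmod (x - y) + 4 * Rmin (Ln n1 n2 x * Ln n1 n2 y) (Ln m1 m2 x * Ln m1 m2 y)).
Proof.
  intros HH Gx Gy. unfold wG. f_equal.
  fold (setA G x y). fold (setA G y x).
  set (V := sqrt _).
  assert (HA : V <= Rinf (setA G x y)).
  { apply Rinf_ge. apply (setA_ne n1 n2 m1 m2); auto. apply (setA_lb n1 n2 m1 m2); auto. }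
  assert (HB : V <= Rinf (setA G y x)).
  { apply Rinf_ge. apply (setA_ne n1 n2 m1 m2); auto. intros r Hr.
    unfold V. rewrite Cmod_sym, (Rmult_comm (Ln n1 n2 x)), (Rmult_comm (Ln m1 m2 x)).
    apply (setA_lb n1 n2 m1 m2 G); auto. }
  apply Rle_antisym; [|apply Rmin_glb; auto].
  destruct (Rle_lt_dec (Ln n1 n2 x * Ln n1 n2 y) (Ln m1 m2 x * Ln m1 m2 y)) as [Hl|Hl].
  - unfold V. rewrite (Rmin_left (Ln n1 n2 x * Ln n1 n2 y)) by auto.
    destruct (attain n1 n2 m1 m2 G x y HH Gx Gy Hl) as [H|H].
    + eapply Rle_trans; [apply Rmin_l|exact H].
    + eapply Rle_trans; [apply Rmin_r|exact H].
  - unfold V. rewrite (Rmin_right (Ln n1 n2 x * Ln n1 n2 y)) by lra.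
    destruct (attain m1 m2 n1 n2 G x y (HP_swap _ _ _ _ _ HH) Gx Gy ltac:(lra)) as [H|H].
    + eapply Rle_trans; [apply Rmin_l|exact H].
    + eapply Rle_trans; [apply Rmin_r|exact H].
Qed.


Lemma HP_sector (th : R) : 0 < th -> th <= PI -> HP 0 1 (sin th) (- cos th) (sector th).
Proof.
  intros H1 H2. split; [ring|split;[|split]].
  - assert (H := sin2_cos2 th). unfold Rsqr in H. lra.
  - assert (cos th < 1). { rewrite <- cos_0. apply cos_decreasing_1; lra. } lra.
  - intros z. rewrite sector_iff by auto. unfold Ln. lra.
Qed.

Definition pol (r phi : R) : C := (r * cos phi, r * sin phi).

Lemma Cmod_pol (r phi : R) : 0 <= r -> Cmod (pol r phi) = r.
Proof.
  intros. unfold pol. apply Cmod_eq_of_sq; auto. simpl.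
  assert (H1 := sin2_cos2 phi). unfold Rsqr in H1. nra.
Qed.

Lemma sector_pol (th r phi : R) : 0 < th -> th <= PI -> 0 < r -> 0 < phi < th -> sector th (pol r phi).
Proof.
  intros. rewrite sector_iff by auto. unfold pol, Ln; simpl. split.
  - apply Rmult_lt_0_compat; auto. apply sin_gt_0; lra.
  - replace (sin th * (r * cos phi) + - cos th * (r * sin phi)) with (r * sin (th - phi)) by (rewrite sin_minus; ring).
    apply Rmult_lt_0_compat; auto. apply sin_gt_0; lra.
Qed.

Lemma parg_pol (r phi : R) : 0 < r -> 0 < phi < PI -> parg (pol r phi) = phi.
Proof.
  intros Hr Hp. unfold parg. rewrite Cmod_pol by lra. unfold pol, Re, Im; simpl.
  assert (0 < r * sin phi) by (apply Rmult_lt_0_compat; auto; apply sin_gt_0; lra).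
  destruct (Rle_dec 0 (r * sin phi)); [|lra].
  replace (r * cos phi / r) with (cos phi) by (field; lra). apply acos_cos. lra.
Qed.

Lemma Cmod_pol_diff (r s a b : R) :
  Cmod (pol r a - pol s b) = sqrt (r*r + s*s - 2*r*s*cos (a - b)).
Proof.
  unfold pol. rewrite Cminus_pair, Cmod_pair. f_equal. rewrite cos_minus.
  assert (H1 := sin2_cos2 a). assert (H2 := sin2_cos2 b). unfold Rsqr in *. nra.
Qed.

Lemma Ln_pol1 r a : Ln 0 1 (pol r a) = r * sin a.
Proof. unfold Ln, pol; simpl. ring. Qed.

Lemma Ln_pol2 th r a : Ln (sin th) (- cos th) (pol r a) = r * sin (th - a).
Proof. unfold Ln, pol; simpl. rewrite sin_minus. ring. Qed.

Lemma sinprod_diff (al a b : R) :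
  sin a * sin b - sin (al - a) * sin (al - b) = - (sin al * sin (al - (a + b))).
Proof.
  rewrite !sin_minus, sin_plus, cos_plus. assert (H := sin2_cos2 al). unfold Rsqr in H.
  assert (E : sin a * sin b - (sin al * cos a - cos al * sin a) * (sin al * cos b - cos al * sin b) -
   - (sin al * (sin al * (cos a * cos b - sin a * sin b) - cos al * (sin a * cos b + cos a * sin b)))
   = sin a * sin b * (1 - (sin al * sin al + cos al * cos al))) by ring.
  rewrite H in E. lra.
Qed.

Lemma sqrt_pos_sq (X : R) : 0 < X -> 0 < sqrt X.
Proof. intros. apply sqrt_lt_R0. auto. Qed.

Lemma w_pol (th r s a b : R) : 0 < th -> th <= PI -> 0 < r -> 0 < s -> 0 < a < th -> 0 < b < th ->
  let A := r*r + s*s - 2*r*s*cos (a - b) in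
  wG (sector th) (pol r a) (pol s b) =
  sqrt A / sqrt (A + 4 * Rmin (r * s * (sin a * sin b)) (r * s * (sin (th - a) * sin (th - b)))).
Proof.
  intros Hth HthP Hr Hs Ha Hb A.
  rewrite (wG_eq 0 1 (sin th) (- cos th)); auto.
  - rewrite Cmod_pol_diff, !Ln_pol1, !Ln_pol2. fold A.
    assert (0 <= A). { unfold A. assert (H := COS_bound (a - b)).
      assert (0 <= (r-s)*(r-s)) by (apply Rle_0_sqr).
      assert (0 <= r*s*(1 - cos (a-b))) by (apply Rmult_le_pos; nra). nra. }
    rewrite sqrt_sqrt by auto. replace (r * sin a * (s * sin b)) with (r * s * (sin a * sin b)) by ring. replace (r * sin (th - a) * (s * sin (th - b))) with (r * s * (sin (th - a) * sin (th - b))) by ring. reflexivity.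
  - apply HP_sector; auto.
  - apply sector_pol; auto.
  - apply sector_pol; auto.
Qed.

Lemma min_case1 (th a b r s : R) : 0 < th -> th <= PI -> 0 < a -> 0 < b -> a + b <= th -> 0 < r -> 0 < s ->
  Rmin (r * s * (sin a * sin b)) (r * s * (sin (th - a) * sin (th - b))) = r * s * (sin a * sin b).
Proof.
  intros. apply Rmin_left. assert (H6 := sinprod_diff th a b).
  assert (0 <= sin th) by (apply sin_ge_0; lra).
  assert (0 <= sin (th - (a+b))) by (apply sin_ge_0; lra).
  assert (0 <= sin th * sin (th - (a + b))) by (apply Rmult_le_pos; auto).
  apply Rmult_le_compat_l. nra. lra.
Qed.

Lemma min_case2 (th a b r s : R) : 0 < th -> th <= PI -> a < th -> b < th -> th <= a + b -> 0 < r -> 0 < s ->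
  Rmin (r * s * (sin a * sin b)) (r * s * (sin (th - a) * sin (th - b))) = r * s * (sin (th - a) * sin (th - b)).
Proof.
  intros. apply Rmin_right. assert (H6 := sinprod_diff th a b).
  assert (0 <= sin th) by (apply sin_ge_0; lra).
  assert (sin (th - (a+b)) <= 0).
  { replace (th - (a+b)) with (- (a + b - th)) by ring. rewrite sin_neg.
    assert (0 <= sin (a+b-th)) by (apply sin_ge_0; lra). lra. }
  assert (sin th * sin (th - (a + b)) <= 0) by nra.
  apply Rmult_le_compat_l. nra. lra.
Qed.

Lemma one_minus_cos (t : R) : 1 - cos t = 2 * sin (Rabs t / 2) ^ 2.
Proof.
  replace t with (2 * (t/2)) at 1 by field. rewrite cos_2a_sin.
  unfold Rabs. destruct (Rcase_abs t).
  - replace (- t / 2) with (- (t/2)) by field. rewrite sin_neg. ring.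
  - ring.
Qed.

Lemma sinprod_half (a b : R) : sin a * sin b = sin ((a+b)/2) ^ 2 - sin (Rabs (a - b) / 2) ^ 2.
Proof.
  rewrite sin_sq_diff. unfold Rabs. destruct (Rcase_abs (a - b)).
  - replace ((a + b) / 2 + - (a - b) / 2) with b by field. replace ((a + b) / 2 - - (a - b) / 2) with a by field. ring.
  - replace ((a + b) / 2 + (a - b) / 2) with a by field. replace ((a + b) / 2 - (a - b) / 2) with b by field. ring.
Qed.

Lemma ineq_polar (k al r s a b : R) : 1 <= k -> 0 < al -> k * al <= PI -> 0 < r -> 0 < s ->
  0 < a -> 0 < b -> a + b <= al ->
  let R := Rpower r k in let S := Rpower s k in
  let A := r*r + s*s - 2*r*s*cos (a - b) in let M := r*s*(sin a * sin b) in
  let A' := R*R + S*S - 2*R*S*cos (k*a - k*b) in let M' := R*S*(sin (k*a) * sin (k*b)) in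
  A*(A'+4*M') <= A'*(A+4*M) /\ A'*(A+4*M)*sin (k*(al/2))^2 <= k*k*sin (al/2)^2*A*(A'+4*M').
Proof.
  intros Hk Hal Hkal Hr Hs Ha Hb Hab R S A M A' M'.
  set (x := (ln r - ln s)/2). set (mid := (ln r + ln s)/2).
  set (c := Rabs (a - b) / 2). set (e := (a + b)/2).
  assert (Hc : 0 <= c) by (unfold c; assert (0 <= Rabs (a-b)) by apply Rabs_pos; lra).
  assert (Hce : c <= e) by (unfold c, e; unfold Rabs; destruct (Rcase_abs (a - b)); lra).
  destruct (core_trig k al x c e Hk Hal Hkal Hc Hce ltac:(unfold e; lra) ltac:(unfold e; lra)) as [C1 C2].
  set (p := sh x ^ 2) in *. set (P := sh (k*x) ^ 2) in *.
  set (s1 := sin c ^ 2) in *. set (s2 := sin e ^ 2) in *.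
  set (s1' := sin (k*c) ^ 2) in *. set (s2' := sin (k*e) ^ 2) in *.
  set (sa := sin (al/2) ^ 2) in *. set (sa' := sin (k*(al/2)) ^ 2) in *.
  set (m0 := exp mid). set (M0 := exp (k*mid)).
  assert (Er : r = m0 * exp x).
  { unfold m0. rewrite <- exp_plus. unfold mid, x. replace ((ln r + ln s) / 2 + (ln r - ln s) / 2) with (ln r) by field.
    rewrite exp_ln; auto. }
  assert (Es : s = m0 * exp (-x)).
  { unfold m0. rewrite <- exp_plus. unfold mid, x. replace ((ln r + ln s) / 2 + - ((ln r - ln s) / 2)) with (ln s) by field.
    rewrite exp_ln; auto. }
  assert (ER : R = M0 * exp (k*x)).
  { unfold R, Rpower, M0. rewrite <- exp_plus. f_equal. unfold mid, x. field. }
  assert (ES : S = M0 * exp (-(k*x))).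
  { unfold S, Rpower, M0. rewrite <- exp_plus. f_equal. unfold mid, x. field. }
  assert (Euv : forall t, exp t * exp (-t) = 1).
  { intros t. rewrite <- exp_plus. replace (t + - t) with 0 by ring. apply exp_0. }
  assert (Hm0 : 0 < m0) by apply exp_pos. assert (HM0 : 0 < M0) by apply exp_pos.
  assert (EA : A = 4 * (m0*m0) * (p + s1)).
  { unfold A, p, s1. replace (r*r + s*s - 2*r*s*cos (a-b)) with ((r - s)*(r-s) + 2*(r*s)*(1 - cos (a - b))) by ring.
    rewrite one_minus_cos. fold c. rewrite Er, Es. unfold sh. rewrite exp_Ropp. field. apply Rgt_not_eq, exp_pos. }
  assert (EM : M = m0*m0*(s2 - s1)).
  { unfold M, s1, s2. rewrite sinprod_half. fold c e. rewrite Er, Es. rewrite exp_Ropp. field. apply Rgt_not_eq, exp_pos. }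
  assert (Ekc : sin (Rabs (k*a - k*b) / 2) ^ 2 = s1').
  { unfold s1', c. replace (k*a - k*b) with (k * (a - b)) by ring. rewrite Rabs_mult, (Rabs_right k) by lra.
    f_equal. f_equal. field. }
  assert (EA' : A' = 4 * (M0*M0) * (P + s1')).
  { unfold A', P. replace (R*R + S*S - 2*R*S*cos (k*a - k*b)) with ((R - S)*(R-S) + 2*(R*S)*(1 - cos (k*a - k*b))) by ring.
    rewrite one_minus_cos. rewrite Ekc. rewrite ER, ES. unfold sh. rewrite exp_Ropp. field. apply Rgt_not_eq, exp_pos. }
  assert (EM' : M' = M0*M0*(s2' - s1')).
  { unfold M'. rewrite sinprod_half. rewrite Ekc. unfold s2', e.
    replace ((k * a + k * b) / 2) with (k * ((a + b) / 2)) by field.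
    rewrite ER, ES. rewrite exp_Ropp. field. apply Rgt_not_eq, exp_pos. }
  assert (EA4 : A + 4*M = 4*(m0*m0)*(p + s2)) by (rewrite EA, EM; ring).
  assert (EA4' : A' + 4*M' = 4*(M0*M0)*(P + s2')) by (rewrite EA', EM'; ring).
  rewrite EA4, EA4', EA, EA'.
  assert (Hpos : 0 < 16 * (m0*m0) * (M0*M0)) by (apply Rmult_lt_0_compat; [nra|nra]).
  split.
  - replace (4 * (m0 * m0) * (p + s1) * (4 * (M0 * M0) * (P + s2'))) with ((16 * (m0*m0) * (M0*M0)) * ((p+s1)*(P+s2'))) by ring.
    replace (4 * (M0 * M0) * (P + s1') * (4 * (m0 * m0) * (p + s2))) with ((16 * (m0*m0) * (M0*M0)) * ((P+s1')*(p+s2))) by ring.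
    apply Rmult_le_compat_l; lra.
  - replace (4 * (M0 * M0) * (P + s1') * (4 * (m0 * m0) * (p + s2)) * sa') with ((16 * (m0*m0) * (M0*M0)) * ((P+s1')*(p+s2)*sa')) by ring.
    replace (k * k * sa * (4 * (m0 * m0) * (p + s1)) * (4 * (M0 * M0) * (P + s2'))) with ((16 * (m0*m0) * (M0*M0)) * (k*k*sa*(p+s1)*(P+s2'))) by ring.
    apply Rmult_le_compat_l; lra.
Qed.


Lemma A_nonneg (r s t : R) : 0 < r -> 0 < s -> 0 <= r*r + s*s - 2*r*s*cos t.
Proof.
  intros. assert (Hc := COS_bound t).
  assert (0 <= (r-s)*(r-s)) by (apply Rle_0_sqr).
  assert (0 <= r*s*(1 - cos t)) by (apply Rmult_le_pos; nra). nra.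
Qed.

Lemma sq_ratio_le (A B A' B' : R) : 0 <= A -> 0 < B -> 0 <= A' -> 0 < B' -> A * B' <= A' * B ->
  sqrt A / sqrt B <= sqrt A' / sqrt B'.
Proof.
  intros. rewrite <- !sqrt_div by auto. apply sqrt_le_1_alt.
  apply (Rmult_le_reg_r (B*B')). nra.
  replace (A / B * (B * B')) with (A * B') by (field; lra).
  replace (A' / B' * (B * B')) with (A' * B) by (field; lra). lra.
Qed.

Lemma sq_ratio_le_K (A B A' B' K : R) : 0 <= A -> 0 < B -> 0 <= A' -> 0 < B' -> 0 <= K ->
  A' * B <= K * K * A * B' -> sqrt A' / sqrt B' <= K * (sqrt A / sqrt B).
Proof.
  intros. rewrite <- !sqrt_div by auto. rewrite <- (sqrt_square K) at 1 by auto.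
  rewrite <- sqrt_mult; [| nra | apply Rdiv_le_0_compat; lra].
  apply sqrt_le_1_alt.
  apply (Rmult_le_reg_r (B*B')). nra.
  replace (A' / B' * (B * B')) with (A' * B) by (field; lra).
  replace (K * K * (A / B) * (B * B')) with (K * K * A * B') by (field; lra). lra.
Qed.

Lemma spow_pol (al be r phi : R) : 0 < r -> 0 < phi < PI ->
  spow al be (pol r phi) = pol (Rpower r (be/al)) (be/al * phi).
Proof. intros. unfold spow. rewrite Cmod_pol by lra. rewrite parg_pol by auto. reflexivity. Qed.

Lemma main_pol (al be r s a b : R) : 0 < al -> al <= be -> be <= PI -> 0 < r -> 0 < s ->
  0 < a < al -> 0 < b < al ->
  let k := be / al in
  wG (sector al) (pol r a) (pol s b) <= wG (sector be) (pol (Rpower r k) (k*a)) (pol (Rpower s k) (k*b)) /\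
  wG (sector be) (pol (Rpower r k) (k*a)) (pol (Rpower s k) (k*b)) <=
     be * sin (al / 2) / (al * sin (be / 2)) * wG (sector al) (pol r a) (pol s b).
Proof.
  intros Hal Hab HbP Hr Hs Ha Hb k.
  assert (Hk : 1 <= k) by (unfold k; apply (Rmult_le_reg_r al); auto; field_simplify; lra).
  assert (Hkal : k * al = be) by (unfold k; field; lra).
  assert (HR : 0 < Rpower r k) by apply exp_pos. assert (HS : 0 < Rpower s k) by apply exp_pos.
  assert (Hka : 0 < k*a < be) by (split; nra). assert (Hkb : 0 < k*b < be) by (split; nra).
  rewrite (w_pol al r s a b) by lra. rewrite (w_pol be (Rpower r k) (Rpower s k) (k*a) (k*b)) by lra.
  set (R := Rpower r k) in *. set (S := Rpower s k) in *.
  assert (HK : be * sin (al / 2) / (al * sin (be / 2)) = k * sin (al/2) / sin (k*(al/2))).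
  { replace (k*(al/2)) with (be/2) by (rewrite <- Hkal; field). unfold k. field.
    assert (sin (be/2) > 0) by (apply sin_gt_0; lra). repeat split; lra. }
  rewrite HK.
  assert (Hsa : 0 < sin (al/2)) by (apply sin_gt_0; lra).
  assert (Hsa' : 0 < sin (k*(al/2))) by (apply sin_gt_0; nra).
  set (A := r * r + s * s - 2 * r * s * cos (a - b)).
  set (A' := R * R + S * S - 2 * R * S * cos (k * a - k * b)).
  assert (HA : 0 <= A) by (apply A_nonneg; auto). assert (HA' : 0 <= A') by (apply A_nonneg; auto).
  assert (Key : forall M M', 0 < M -> 0 < M' ->
     A*(A'+4*M') <= A'*(A+4*M) -> A'*(A+4*M)*sin (k*(al/2))^2 <= k*k*sin (al/2)^2*A*(A'+4*M') ->
     sqrt A / sqrt (A + 4*M) <= sqrt A' / sqrt (A' + 4*M') /\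
     sqrt A' / sqrt (A' + 4*M') <= k * sin (al/2) / sin (k*(al/2)) * (sqrt A / sqrt (A + 4*M))).
  { intros M M' HM HM' I1 I2. split.
    - apply sq_ratio_le; lra.
    - apply sq_ratio_le_K; try lra.
      + apply Rdiv_le_0_compat; nra.
      + apply (Rmult_le_reg_r (sin (k*(al/2))^2)). nra.
        replace (k * sin (al / 2) / sin (k * (al / 2)) * (k * sin (al / 2) / sin (k * (al / 2))) * A * (A' + 4 * M') * sin (k * (al / 2)) ^ 2)
          with (k * k * sin (al / 2) ^ 2 * A * (A' + 4 * M')) by (field; lra). lra. }
  destruct (Rle_lt_dec (a + b) al) as [Hs1|Hs1].
  - rewrite min_case1 by lra.
    rewrite (min_case1 be (k*a) (k*b)) by nra.
    destruct (ineq_polar k al r s a b Hk Hal ltac:(lra) Hr Hs ltac:(lra) ltac:(lra) Hs1) as [I1 I2].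
    fold R S A A' in I1, I2.
    apply Key; auto.
    + apply Rmult_lt_0_compat. nra. apply Rmult_lt_0_compat; apply sin_gt_0; lra.
    + apply Rmult_lt_0_compat. nra. apply Rmult_lt_0_compat; apply sin_gt_0; nra.
  - rewrite min_case2 by lra.
    rewrite (min_case2 be (k*a) (k*b)) by nra.
    replace (be - k*a) with (k*(al - a)) by (rewrite <- Hkal; ring).
    replace (be - k*b) with (k*(al - b)) by (rewrite <- Hkal; ring).
    destruct (ineq_polar k al r s (al - a) (al - b) Hk Hal ltac:(lra) Hr Hs ltac:(lra) ltac:(lra) ltac:(lra)) as [I1 I2].
    fold R S in I1, I2.
    replace (al - a - (al - b)) with (- (a - b)) in I1, I2 by ring. rewrite cos_neg in I1, I2.
    replace (k * (al - a) - k * (al - b)) with (- (k*a - k*b)) in I1, I2 by ring. rewrite cos_neg in I1, I2.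
    fold A A' in I1, I2.
    apply Key; auto.
    + apply Rmult_lt_0_compat. nra. apply Rmult_lt_0_compat; apply sin_gt_0; lra.
    + apply Rmult_lt_0_compat. nra. apply Rmult_lt_0_compat; apply sin_gt_0; nra.
Qed.

Lemma sin_le_id (t : R) : 0 <= t -> sin t <= t.
Proof.
  intros Ht. assert (H := mono_le (fun u => u - sin u) (fun u => 1 - cos u) 0 t Ht). simpl in H.
  rewrite sin_0 in H. enough (0 - 0 <= t - sin t) by lra. apply H.
  - intros u _. auto_derive. auto. ring.
  - intros u _. assert (H1 := COS_bound u). lra.
Qed.

Lemma cos_lb2 (t : R) : 0 <= t -> 1 - t^2/2 <= cos t.
Proof.
  intros Ht. assert (H := mono_le (fun u => cos u - 1 + u^2/2) (fun u => u - sin u) 0 t Ht). simpl in H.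
  rewrite cos_0 in H. enough (1 - 1 + 0 * (0 * 1) / 2 <= cos t - 1 + t * (t * 1) / 2) by (simpl; lra). apply H.
  - intros u _. auto_derive. auto. field.
  - intros u Hu. assert (H1 := sin_le_id u ltac:(lra)). lra.
Qed.

Lemma sin_lb3 (t : R) : 0 <= t -> t - t^3/6 <= sin t.
Proof.
  intros Ht. assert (H := mono_le (fun u => sin u - u + u^3/6) (fun u => cos u - 1 + u^2/2) 0 t Ht). simpl in H.
  rewrite sin_0 in H. enough (0 - 0 + 0 * (0 * (0 * 1)) / 6 <= sin t - t + t * (t * (t * 1)) / 6) by (simpl in *; lra). apply H.
  - intros u _. auto_derive. auto. field.
  - intros u Hu. assert (H1 := cos_lb2 u ltac:(lra)). simpl in H1. lra.
Qed.

Lemma ratio_le1 (A m : R) : 0 <= A -> 0 <= m -> 0 < A + 4*m -> sqrt A / sqrt (A + 4*m) <= 1.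
Proof.
  intros. assert (0 < sqrt (A + 4*m)) by (apply sqrt_lt_R0; auto).
  apply (Rmult_le_reg_r (sqrt (A + 4*m))); auto. field_simplify; [|lra].
  apply sqrt_le_1_alt. lra.
Qed.

Lemma Rpower_1_l (y : R) : Rpower 1 y = 1.
Proof. unfold Rpower. rewrite ln_1, Rmult_0_r. apply exp_0. Qed.

Lemma part2 (al be c : R) : 0 < al -> al <= be -> be <= PI -> 1 < c ->
  let k := be / al in
  exists r : R, 1 < r /\
  wG (sector be) (pol (Rpower 1 k) (k*(al/2))) (pol (Rpower r k) (k*(al/2))) < c * wG (sector al) (pol 1 (al/2)) (pol r (al/2)).
Proof.
  intros Hal Hab HbP Hc k.
  assert (Hk : 1 <= k) by (unfold k; apply (Rmult_le_reg_r al); auto; field_simplify; lra).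
  assert (Hkal : k * al = be) by (unfold k; field; lra).
  set (r := (c+1)/(c-1) + 1).
  assert (Hr1 : (c+1)/(c-1) < r) by (unfold r; lra).
  assert (Hr0 : 0 < (c+1)/(c-1)) by (apply Rdiv_lt_0_compat; lra).
  assert (Hr : c + 1 < r * (c - 1)).
  { apply (Rmult_lt_compat_r (c-1)) in Hr1; [|lra]. replace ((c + 1) / (c - 1) * (c - 1)) with (c+1) in Hr1 by (field; lra). lra. }
  exists r. split; [unfold r; lra|].
  assert (HR : 0 < Rpower r k) by apply exp_pos.
  rewrite (w_pol be) by (try rewrite Rpower_1_l; nra).
  rewrite (w_pol al) by lra.
  rewrite Rminus_diag, cos_0. rewrite Rminus_diag, cos_0.
  rewrite Rpower_1_l.
  assert (Hsa : 0 < sin (al/2)) by (apply sin_gt_0; lra).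
  assert (Hsa2 : 0 < sin (al - al/2)) by (apply sin_gt_0; lra).
  assert (Hska : 0 < sin (k*(al/2))) by (apply sin_gt_0; nra).
  assert (Hska2 : 0 < sin (be - k*(al/2))) by (apply sin_gt_0; nra).
  set (m' := Rmin _ _).
  assert (Hm' : 0 < m').
  { unfold m'. apply Rmin_glb_lt; apply Rmult_lt_0_compat; nra. }
  set (m := Rmin _ _).
  assert (Hm : 0 < m) by (unfold m; apply Rmin_glb_lt; apply Rmult_lt_0_compat; nra).
  assert (Hm1 : m <= r) .
  { unfold m. eapply Rle_trans; [apply Rmin_l|]. assert (sin (al/2) <= 1) by apply SIN_bound.
    assert (sin (al/2) * sin (al/2) <= 1) by nra. nra. }
  eapply Rle_lt_trans.
  { assert (H := Rle_0_sqr (1 - Rpower r k)). unfold Rsqr in H.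
    apply ratio_le1; lra. }
  set (A := 1 * 1 + r * r - 2 * 1 * r * 1).
  assert (EA : A = (r - 1) * (r - 1)) by (unfold A; ring).
  assert (HB : 0 < A + 4 * m) by nra.
  assert (HsB : 0 < sqrt (A + 4*m)) by (apply sqrt_lt_R0; auto).
  apply (Rmult_lt_reg_r (sqrt (A + 4*m))); auto.
  replace (c * (sqrt A / sqrt (A + 4 * m)) * sqrt (A + 4 * m)) with (sqrt (c * c * A)).
  - rewrite Rmult_1_l. apply sqrt_lt_1_alt. split; [lra|]. rewrite EA.
    assert ((r + 1) * (r + 1) < (c * (r - 1)) * (c * (r - 1))).
    { assert (r + 1 < c * (r - 1)) by nra. apply Rmult_le_0_lt_compat; lra. }
    nra.
  - rewrite sqrt_mult by nra. rewrite sqrt_square by lra. field. lra.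
Qed.

Lemma w_sym1 (th h d : R) : 0 < th -> th <= PI -> 0 < d < h -> 2*h <= th ->
  wG (sector th) (pol 1 (h+d)) (pol 1 (h-d)) = sin d / sin h.
Proof.
  intros Hth HthP Hd Hh.
  rewrite (w_pol th) by lra. rewrite min_case1 by lra.
  replace (h + d - (h - d)) with (2*d) by ring.
  assert (E1 : 1 * 1 + 1 * 1 - 2 * 1 * 1 * cos (2 * d) = (2 * sin d) * (2 * sin d)).
  { replace (1 * 1 + 1 * 1 - 2 * 1 * 1 * cos (2 * d)) with (2 * (1 - cos (2*d))) by ring.
    rewrite one_minus_cos. rewrite Rabs_right by lra. replace (2*d/2) with d by field. ring. }
  assert (E2 : sin (h + d) * sin (h - d) = sin h ^ 2 - sin d ^ 2).
  { rewrite sinprod_half. replace ((h + d + (h - d)) / 2) with h by field.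
    replace (h + d - (h - d)) with (2*d) by ring. rewrite Rabs_right by lra. replace (2*d/2) with d by field. ring. }
  rewrite E1. rewrite Rmult_1_l, Rmult_1_l, E2.
  replace (2 * sin d * (2 * sin d) + 4 * (sin h ^ 2 - sin d ^ 2)) with ((2 * sin h) * (2 * sin h)) by ring.
  assert (0 < sin d) by (apply sin_gt_0; lra). assert (0 < sin h) by (apply sin_gt_0; lra).
  rewrite !sqrt_square by lra. field. lra.
Qed.

Lemma part3 (al be c : R) : 0 < al -> al <= be -> be <= PI ->
  c < be * sin (al / 2) / (al * sin (be / 2)) ->
  let k := be / al in
  exists d : R, 0 < d < al / 2 /\
  c * wG (sector al) (pol 1 (al/2 + d)) (pol 1 (al/2 - d)) <
  wG (sector be) (pol (Rpower 1 k) (k*(al/2 + d))) (pol (Rpower 1 k) (k*(al/2 - d))).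
Proof.
  intros Hal Hab HbP Hc k.
  assert (Hk : 1 <= k) by (unfold k; apply (Rmult_le_reg_r al); auto; field_simplify; lra).
  assert (Hkal : k * al = be) by (unfold k; field; lra).
  assert (Hsa : 0 < sin (al/2)) by (apply sin_gt_0; lra).
  assert (Hsb : 0 < sin (be/2)) by (apply sin_gt_0; lra).
  assert (HK : be * sin (al / 2) / (al * sin (be / 2)) = k * sin (al/2) / sin (be/2)).
  { unfold k. field. lra. }
  rewrite HK in Hc. set (K := k * sin (al/2) / sin (be/2)) in *.
  assert (HKp : 0 < K) by (unfold K; apply Rdiv_lt_0_compat; nra).
  set (g := Rmax 0 (c / K)).
  assert (Hg0 : 0 <= g) by apply Rmax_l.
  assert (Hg1 : g < 1).
  { unfold g. apply Rmax_lub_lt. lra. apply (Rmult_lt_reg_r K); auto. field_simplify; lra. }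
  assert (HcK : c <= g * K).
  { unfold g. destruct (Rle_lt_dec c 0). { assert (0 <= Rmax 0 (c/K) * K) by (apply Rmult_le_pos; [apply Rmax_l|lra]). lra. }
    assert (c / K <= Rmax 0 (c/K)) by apply Rmax_r. apply (Rmult_le_compat_r K) in H; [|lra].
    replace (c / K * K) with c in H by (field; lra). lra. }
  set (t := Rmin (1 - g) (be/4)).
  assert (Ht0 : 0 < t) by (unfold t; apply Rmin_glb_lt; lra).
  assert (Ht1 : t <= 1 - g) by apply Rmin_l.
  assert (Ht2 : t <= be/4) by apply Rmin_r.
  exists (t / k).
  assert (Hd0 : 0 < t / k) by (apply Rdiv_lt_0_compat; lra).
  assert (Hdk : k * (t / k) = t) by (field; lra).
  assert (Hda : t / k <= al / 4).
  { apply (Rmult_le_reg_l k); [lra|]. rewrite Hdk. replace (k * (al/4)) with (be/4) by (rewrite <- Hkal; field). lra. }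
  split; [lra|].
  rewrite (w_sym1 al) by lra.
  rewrite Rpower_1_l.
  replace (k * (al / 2 + t / k)) with (be/2 + t) by (rewrite <- Hkal; field; lra).
  replace (k * (al / 2 - t / k)) with (be/2 - t) by (rewrite <- Hkal; field; lra).
  rewrite (w_sym1 be) by lra.
  assert (Hsd : 0 < sin (t/k)) by (apply sin_gt_0; lra).
  assert (Hst : 0 < sin t) by (apply sin_gt_0; lra).
  assert (Hsdk : sin (t/k) <= t/k) by (apply sin_le_id; lra).
  assert (Hlb := sin_lb3 t ltac:(lra)).
  assert (Hgt : g * t < sin t).
  { assert (t * t <= t * 1) by (apply Rmult_le_compat_l; lra).
    assert (t^3/6 < (1 - g) * t).
    { replace (t^3/6) with (t * (t*t) / 6) by (simpl; field).
      assert (t * (t*t) <= t * (1-g)) by (apply Rmult_le_compat_l; nra). nra. }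
    lra. }
  apply (Rle_lt_trans _ (g * K * (sin (t/k) / sin (al/2)))).
  { apply Rmult_le_compat_r; [apply Rdiv_le_0_compat; lra|lra]. }
  replace (g * K * (sin (t / k) / sin (al / 2))) with (g * k * sin (t/k) / sin (be/2)) by (unfold K; field; lra).
  apply Rmult_lt_compat_r. apply Rinv_0_lt_compat; lra.
  assert (g * k * sin (t/k) <= g * k * (t/k)) by (apply Rmult_le_compat_l; nra).
  replace (g * k * (t/k)) with (g * t) in H by (field; lra). lra.
Qed.


Lemma sector_polar (al : R) (x : C) : sector al x ->
  exists r phi, 0 < r /\ 0 < phi < al /\ x = pol r phi.
Proof.
  intros [Hx0 [phi [Hphi Ex]]]. exists (Cmod x), phi. split; [|split; auto].
  destruct (Rle_lt_or_eq_dec 0 (Cmod x) (Cmod_ge_0 x)) as [|H]; auto.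
  exfalso. apply Hx0. apply Cmod_eq_0. auto.
Qed.

Theorem lemma5p8 (alpha beta : R) :
  0 < alpha -> alpha <= beta -> beta <= PI ->
  let f := spow alpha beta in
  let K := beta * sin (alpha / 2) / (alpha * sin (beta / 2)) in
  (forall x y : C, sector alpha x -> sector alpha y ->
     wG (sector alpha) x y <= wG (sector beta) (f x) (f y) /\
     wG (sector beta) (f x) (f y) <= K * wG (sector alpha) x y) /\
  (forall c : R, 1 < c -> exists x y : C, sector alpha x /\ sector alpha y /\
     wG (sector beta) (f x) (f y) < c * wG (sector alpha) x y) /\
  (forall c : R, c < K -> exists x y : C, sector alpha x /\ sector alpha y /\
     c * wG (sector alpha) x y < wG (sector beta) (f x) (f y)).
Proof.
  intros Hal Hab HbP f K. split; [|split].
  - intros x y Hx Hy.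
    destruct (sector_polar alpha x Hx) as [r [phi [Hr [Hphi ->]]]].
    destruct (sector_polar alpha y Hy) as [s [psi [Hs [Hpsi ->]]]].
    unfold f. rewrite !spow_pol by lra. unfold K.
    apply main_pol; auto.
  - intros c Hc. destruct (part2 alpha beta c Hal Hab HbP Hc) as [r [Hr H]].
    exists (pol 1 (alpha/2)), (pol r (alpha/2)).
    split; [apply sector_pol; lra|]. split; [apply sector_pol; lra|].
    unfold f. rewrite !spow_pol by lra. exact H.
  - intros c Hc. destruct (part3 alpha beta c Hal Hab HbP Hc) as [d [Hd H]].
    exists (pol 1 (alpha/2 + d)), (pol 1 (alpha/2 - d)).
    split; [apply sector_pol; lra|]. split; [apply sector_pol; lra|].
    unfold f. rewrite !spow_pol by lra. exact H.
Qed.
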